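(* Let $H^n$ be a binary Hamming code of length $n=2^k-1$ and $\lambda:H^n\to\{0,1\}$ a Boolean function with $\lambda(0^n)=0$. For $m=2^j(n+1)-1$, $j\ge 0$, define Hamming codes recursively by $H^{2m+1}=\{(x+y,|x|,x)\mid x\in F^m,\ y\in H^m\}$, and define $\lambda_m:H^m\to\{0,1\}$ by $\lambda_n=\lambda$ and $\lambda_{2m+1}(w)=\lambda_m(y)$ whenever $w\in (y,0^{m+1})+R^{2m+1}_{m+1}$, $y\in H^m$. Let $C_0=V_{H^n}^\lambda=\{(x+y,|x|+\lambda(y),x)\mid x\in F^n, y\in H^n\}$, $C_{i+1}=\{(x+y,|x|,x)\mid x\in F^{\ell_i},\ y\in C_i\}$ where $\ell_i$ is the length of $C_i$, let $s\ge 0$ and $C=C_s$, of length $N=2^{s+1}(n+1)-1$. Then: 1. $C$ is equivalent to the code $V_{H^{(N-1)/2}}^{\lambda_{(N-1)/2}}=\{(x+y,|x|+\lambda_{(N-1)/2}(y),x)\mid x\in F^{(N-1)/2},\ y\in H^{(N-1)/2}\}$. 2. If $R_j^{(N-1)/2}$ (a component of $H^{(N-1)/2}$, $1\le j\le (N-1)/2$) pierces the zeros and ones of $\lambda_{(N-1)/2}$, then the components $R_j^N$ and $R_{j+(N+1)/2}^N$ of $H^N$ pierce the zeros and ones of $\lambda_N$.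
   Context: $|x|=x_1+\dots+x_m\pmod 2$ for $x\in F^m$. For a binary perfect code of length $m$ (here a Hamming code $H^m$) and $i\in\{1,\dots,m\}$, the (linear) $i$-component $R_i^m$ is the linear span of the weight-3 codewords whose support contains $i$; for $H^{2m+1}$ as defined, $R^{2m+1}_{m+1}=\{(x,|x|,x)\mid x\in F^m\}$, and its cosets $(y,0^{m+1})+R^{2m+1}_{m+1}$, $y\in H^m$, partition $H^{2m+1}$. A component $R$ pierces the zeros and ones of a function $\mu$ if $R$ contains both codewords where $\mu=0$ and codewords where $\mu=1$. Two codes of length $N$ are equivalent if one is mapped onto the other by an automorphism of $F^N$ (a translation followed by a coordinate permutation). *)

(* Defs.v *)
(* Binary words are represented as sequences of booleans
   (F = GF(2) = bool, addition = xor); a code is a set (predicate) of words. *)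
From mathcomp Require Import all_boot all_fingroup.
Set Implicit Arguments. Unset Strict Implicit. Unset Printing Implicit Defensive.

Definition word := seq bool.
Definition code := word -> Prop.

Definition addw (x y : word) : word := [seq a.1 (+) a.2 | a <- zip x y].
Definition parity (x : word) : bool := foldr addb false x.
Definition wt (x : word) : nat := count id x.
Definition dist (x y : word) : nat := wt (addw x y).
Definition zerow (m : nat) : word := nseq m false.

(* binary Hamming code of length n = linear perfect 1-error-correcting code *)
Definition is_hamming (n : nat) (H : code) : Prop :=
  [/\ (forall w, H w -> size w = n),
      H (zerow n),
      (forall u v, H u -> H v -> H (addw u v)) &
      (forall x, size x = n -> exists! c, H c /\ dist x c <= 1)].

Definition Vcode (m : nat) (H : code) (mu : word -> bool) : code :=
  fun w => exists x y, size x = m /\ H y /\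
    w = addw x y ++ [:: parity x (+) mu y] ++ x.

Definition dbl (m : nat) (D : code) : code :=
  fun w => exists x y, size x = m /\ D y /\ w = addw x y ++ [:: parity x] ++ x.

Definition hlen (n j : nat) : nat := 2 ^ j * n.+1 - 1.

Fixpoint Hfam (n : nat) (H : code) (j : nat) : code :=
  match j with
  | 0 => H
  | j'.+1 => dbl (hlen n j') (Hfam n H j')
  end.

(* lambda_{m_j}: lambda_{m_0} = lambda and lambda_{2m+1}(w) = lambda_m(y) where
   w in (y, 0^{m+1}) + R^{2m+1}_{m+1}, i.e. w = (x+y,|x|,x); y is recovered as
   (first m coordinates of w) + (last m coordinates of w). *)
Fixpoint lamfam (n : nat) (lam : word -> bool) (j : nat) : word -> bool :=
  match j with
  | 0 => lam
  | j'.+1 => fun w =>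
      let m := hlen n j' in
      lamfam n lam j' (addw (take m w) (drop m.+1 w))
  end.

(* C_0 = V_{H^n}^lambda, C_{i+1} = {(x+y,|x|,x) | x in F^{l_i}, y in C_i},
   l_i = length of C_i = 2^{i+1}(n+1) - 1 *)
Fixpoint Cfam (n : nat) (H : code) (lam : word -> bool) (i : nat) : code :=
  match i with
  | 0 => Vcode n H lam
  | i'.+1 => dbl (hlen n i'.+1) (Cfam n H lam i')
  end.

Definition permw (L : nat) (s : {perm 'I_L}) (w : word) : word :=
  [seq nth false w (s i) | i <- enum 'I_L].

Definition equiv_codes (L : nat) (A B : code) : Prop :=
  exists (v : word) (s : {perm 'I_L}), size v = L /\
    forall w, B w <-> exists u, A u /\ w = permw s (addw u v).

Definition span (L : nat) (S : code) : code :=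
  fun w => exists ws : seq word, (forall u, u \in ws -> S u) /\
    w = foldr addw (zerow L) ws.

(* the i-component (i is 1-based, 1 <= i <= L) of a code D of length L:
   span of the weight-3 codewords whose support contains coordinate i *)
Definition component (L : nat) (D : code) (i : nat) : code :=
  span L (fun w => [/\ D w, size w = L, wt w = 3 & nth false w i.-1]).

Definition pierces (R : code) (mu : word -> bool) : Prop :=
  (exists w, R w /\ mu w = false) /\ (exists w, R w /\ mu w = true).

(* Main.v *)
Require Import Defs.
From mathcomp Require Import all_boot all_fingroup.
From mathcomp Require Import zify.
Set Implicit Arguments. Unset Strict Implicit. Unset Printing Implicit Defensive.

Lemma size_addw x y : size (addw x y) = minn (size x) (size y).
Proof. by rewrite /addw size_map size_zip. Qed.

Lemma nth_addw x y i : size x = size y ->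
  nth false (addw x y) i = nth false x i (+) nth false y i.
Proof.
move=> hs; rewrite /addw.
case: (ltnP i (size x)) => hi.
  by rewrite (nth_map (false,false)) ?size_zip -?hs ?minnn // nth_zip.
by rewrite !nth_default ?size_map ?size_zip -?hs ?minnn.
Qed.

Ltac bcase := repeat match goal with |- context [nth false ?w ?i] => case: (nth false w i) end.
Ltac pw := apply: (@eq_from_nth _ false); [rewrite ?size_addw; lia |
  move=> i _; rewrite !nth_addw; try (rewrite ?size_addw; lia); bcase; by []].

Lemma addw_cat a b c d : size a = size c -> addw (a ++ b) (c ++ d) = addw a c ++ addw b d.
Proof. by move=> h; rewrite /addw zip_cat // map_cat. Qed.

Lemma parity_cat s t : parity (s ++ t) = parity s (+) parity t.
Proof. by elim: s => //= a s ->; rewrite addbA. Qed.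

Lemma parity_addw x y : size x = size y -> parity (addw x y) = parity x (+) parity y.
Proof.
elim: x y => [|a x IH] [|b y] //= [h]; rewrite IH //.
by case: a; case: b; case: (parity x); case: (parity y).
Qed.

Lemma parity_wt x : parity x = odd (wt x).
Proof. by elim: x => //= a x ->; rewrite /wt /= oddD; case: a. Qed.

Lemma wt_cat s t : wt (s ++ t) = wt s + wt t.
Proof. by rewrite /wt count_cat. Qed.


Definition reidx (f : nat -> nat) (L : nat) (w : word) : word :=
  mkseq (fun i => nth false w (f i)) L.
Definition isbij (f : nat -> nat) (L : nat) :=
  (forall i, i < L -> f i < L) /\ exists g, (forall i, i < L -> g i < L) /\
   (forall i, i < L -> g (f i) = i) /\ (forall i, i < L -> f (g i) = i).
Definition EQ L (A B : code) := (forall u, A u -> size u = L) /\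
  exists f, isbij f L /\ forall w, B w <-> exists u, A u /\ w = reidx f L u.

Lemma size_reidx f L w : size (reidx f L w) = L.
Proof. by rewrite size_mkseq. Qed.

Lemma reidx_comp f g L w : (forall i, i < L -> g i < L) ->
  reidx g L (reidx f L w) = reidx (fun i => f (g i)) L w.
Proof.
move=> hg; apply: (@eq_from_nth _ false); rewrite ?size_reidx // => i hi.
by rewrite !nth_mkseq ?hg.
Qed.

Lemma reidx_id f L w : size w = L -> (forall i, i < L -> f i = i) -> reidx f L w = w.
Proof.
move=> hs hf; apply: (@eq_from_nth _ false); rewrite ?size_reidx // => i hi.
by rewrite nth_mkseq ?hf.
Qed.

Lemma EQ_trans L A B C : EQ L A B -> EQ L B C -> EQ L A C.
Proof.
move=> [hA [f [[hf [g [hg [hgf hfg]]]] hAB]]] [_ [f' [[hf' [g' [hg' [hgf' hfg']]]] hBC]]].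
split=> //; exists (fun i => f (f' i)); split.
  split; first by move=> i hi; apply/hf/hf'.
  exists (fun i => g' (g i)); split; first by move=> i hi; apply/hg'/hg.
  split=> i hi; first by rewrite hgf ?hf' // hgf'.
  by rewrite hfg' ?hg // hfg.
move=> w; split.
- move=> /hBC [v [/hAB [u [hu ->]] ->]]; exists u; split=> //; rewrite reidx_comp //.
- move=> [u [hu ->]]; apply/hBC; exists (reidx f L u); split; first by apply/hAB; exists u.
  by rewrite reidx_comp.
Qed.

Lemma EQ_refl L A : (forall u, A u -> size u = L) -> EQ L A A.
Proof.
move=> hA; split=> //; exists id; split.
  by split=> // ; exists id.
move=> w; split; first by move=> h; exists w; rewrite reidx_id ?hA.
by move=> [u [hu ->]]; rewrite reidx_id ?hA.
Qed.

Lemma EQ_ext L A A' B B' : (forall w, A w <-> A' w) -> (forall w, B w <-> B' w) ->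
  EQ L A B -> EQ L A' B'.
Proof.
move=> eA eB [hA [f [hf hAB]]]; split; first by move=> u /eA /hA.
exists f; split=> // w; split.
  by move=> /eB /hAB [u [/eA hu ->]]; exists u.
by move=> [u [/eA hu ->]]; apply/eB/hAB; exists u.
Qed.

Lemma reidx_addw f M x y : size x = M -> size y = M ->
  reidx f M (addw x y) = addw (reidx f M x) (reidx f M y).
Proof.
move=> hx hy; apply: (@eq_from_nth _ false); rewrite ?size_reidx ?size_addw ?size_reidx ?hx ?hy ?minnn // => i hi.
by rewrite nth_addw ?size_reidx // !nth_mkseq // nth_addw ?hx.
Qed.

Lemma perm_reidx f M x : isbij f M -> size x = M -> perm_eq (reidx f M x) x.
Proof.
move=> [hf [g [hg [hgf hfg]]]] hx.
have -> : reidx f M x = map (nth false x) (map f (iota 0 M)) by rewrite /reidx /mkseq -map_comp.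
have {2}-> : x = map (nth false x) (iota 0 M) by rewrite -hx -/(mkseq _ _) mkseq_nth.
apply: perm_map; apply: uniq_perm.
- rewrite map_inj_in_uniq ?iota_uniq // => i j.
  by rewrite !mem_iota !add0n => hi hj e; rewrite -(hgf i hi) -(hgf j hj) e.
- exact: iota_uniq.
move=> i; rewrite mem_iota add0n; apply/mapP/idP.
  by move=> [j]; rewrite mem_iota add0n => hj ->; apply: hf.
by move=> hi; exists (g i); rewrite ?mem_iota ?add0n ?hg ?hfg.
Qed.

Lemma parity_reidx f M x : isbij f M -> size x = M -> parity (reidx f M x) = parity x.
Proof.
move=> hb hx; rewrite !parity_wt /wt.
by rewrite (seq.permP (perm_reidx hb hx)).
Qed.


Definition blockf (f : nat -> nat) M i :=
  if i < M then f i else if i == M then M else M.+1 + f (i - M.+1).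

Lemma blockf_in f M i : (forall i, i < M -> f i < M) -> i < M.+1 + M -> blockf f M i < M.+1 + M.
Proof.
move=> hf hi; rewrite /blockf; case: ifP => h1; first by have := hf i h1; lia.
case: ifP => h2; first lia.
have := hf (i - M.+1) ltac:(lia); lia.
Qed.

Lemma blockf_inv f g M i : (forall i, i < M -> f i < M) -> (forall i, i < M -> g (f i) = i) ->
  i < M.+1 + M -> blockf g M (blockf f M i) = i.
Proof.
move=> hf hgf hi; case: (ltnP i M) => h1.
  by rewrite /blockf h1 /= hf // hgf.
case: (eqVneq i M) => h2.
  by rewrite /blockf h2 ltnn eqxx /= ltnn eqxx.
have h3 := hf (i - M.+1) ltac:(lia).
rewrite /blockf (_ : (i < M) = false) ?(negbTE h2) /=; last by lia.
have -> : (M.+1 + f (i - M.+1) < M) = false by lia.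
have -> : (M.+1 + f (i - M.+1) == M) = false by lia.
rewrite (_ : M.+1 + f (i - M.+1) - M.+1 = f (i - M.+1)); last by lia.
rewrite hgf; lia.
Qed.

Lemma isbij_block f M : isbij f M -> isbij (blockf f M) (M.+1 + M).
Proof.
move=> [hf [g [hg [hgf hfg]]]]; split; first by move=> i; apply: blockf_in.
exists (blockf g M); split; first by move=> i; apply: blockf_in.
by split=> i hi; apply: blockf_inv.
Qed.

Lemma reidx_block f M P q Q : (forall i, i < M -> f i < M) -> size P = M ->
  reidx (blockf f M) (M.+1 + M) (P ++ q :: Q) = reidx f M P ++ q :: reidx f M Q.
Proof.
move=> hf hP; apply: (@eq_from_nth _ false).
  by rewrite size_reidx size_cat /= !size_reidx; lia.
move=> i; rewrite size_reidx => hi; rewrite nth_mkseq // /blockf.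
rewrite [in RHS]nth_cat size_reidx.
case: ifP => h1; first by rewrite nth_cat hP hf // nth_mkseq.
case: ifP => h2.
  by move/eqP: h2 => ->; rewrite subnn nth_cat hP ltnn subnn.
have h3 := hf (i - M.+1) ltac:(lia).
rewrite nth_cat hP (_ : (M.+1 + f (i - M.+1) < M) = false); last by lia.
rewrite (_ : M.+1 + f (i - M.+1) - M = (f (i - M.+1)).+1); last by lia.
rewrite (_ : i - M = (i - M.+1).+1); last by lia.
by rewrite /= nth_mkseq //; lia.
Qed.

Lemma EQ_dbl M L A B : EQ M A B -> L = M.+1 + M -> EQ L (dbl M A) (dbl M B).
Proof.
move=> [hA [f [hb hAB]]] ->; have [hf [g [hg [hgf hfg]]]] := hb.
have hbg : isbij g M by split=> //; exists f.
split.
  move=> w [x [y [hx [hy ->]]]]; rewrite !size_cat size_addw hx (hA _ hy) minnn /=; lia.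
exists (blockf f M); split; first exact: isbij_block.
move=> w; split.
- move=> [x [y [hx [/hAB [u [hu ->]] ->]]]].
  exists (addw (reidx g M x) u ++ [:: parity (reidx g M x)] ++ reidx g M x); split.
    by exists (reidx g M x), u; rewrite size_reidx.
  rewrite reidx_block ?size_addw ?size_reidx ?(hA _ hu) ?minnn //.
  rewrite reidx_addw ?size_reidx ?(hA _ hu) // reidx_comp // (parity_reidx hbg) ?size_reidx //.
  by rewrite (reidx_id hx hgf).
- move=> [u [[x [y [hx [hy ->]]]] ->]].
  exists (reidx f M x), (reidx f M y); rewrite size_reidx; split=> //; split.
    by apply/hAB; exists y.
  rewrite reidx_block ?size_addw ?(hA _ hy) ?hx ?minnn // reidx_addw ?(hA _ hy) //.
  by rewrite parity_reidx.
Qed.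


Definition swapf a b i :=
  if i < a then i else if i < a + b then i + b else if i < a + b + b then i - b else i.

Lemma swapf_inv a b i : swapf a b (swapf a b i) = i.
Proof.
rewrite /swapf.
case: (ltnP i a) => h1; first by rewrite h1.
case: (ltnP i (a + b)) => h2.
  rewrite (_ : (i + b < a) = false); last by lia.
  rewrite (_ : (i + b < a + b) = false); last by lia.
  rewrite (_ : (i + b < a + b + b) = true); last by lia.
  lia.
case: (ltnP i (a + b + b)) => h3.
  rewrite (_ : (i - b < a) = false); last by lia.
  rewrite (_ : (i - b < a + b) = true); last by lia.
  lia.
rewrite (_ : (i < a) = false); last by lia.
rewrite (_ : (i < a + b) = false); last by lia.
by rewrite (_ : (i < a + b + b) = false); last by lia.
Qed.

Lemma swapf_in a b L i : a + b + b <= L -> i < L -> swapf a b i < L.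
Proof.
move=> h hi; rewrite /swapf.
case: ifP => h1 //; case: ifP => h2; first lia.
case: ifP => h3 //; lia.
Qed.

Lemma isbij_swap a b L : a + b + b <= L -> isbij (swapf a b) L.
Proof.
move=> h; split; first by move=> i; apply: swapf_in.
exists (swapf a b); split; first by move=> i; apply: swapf_in.
by split=> i _; rewrite swapf_inv.
Qed.

Lemma nth4 (A B C D : word) i :
  nth false (A ++ B ++ C ++ D) i =
  if i < size A then nth false A i else if i < size A + size B then nth false B (i - size A)
  else if i < size A + size B + size C then nth false C (i - size A - size B)
  else nth false D (i - size A - size B - size C).
Proof.
rewrite !nth_cat.
by repeat (case: ifP => ?); try (congr (nth _ _ _); lia); lia.
Qed.

Lemma reidx_swap (A B C D : word) a b d L : size A = a -> size B = b -> size C = b -> size D = d ->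
  L = a + b + b + d -> reidx (swapf a b) L (A ++ B ++ C ++ D) = A ++ C ++ B ++ D.
Proof.
move=> hA hB hC hD hL; apply: (@eq_from_nth _ false).
  by rewrite size_reidx !size_cat; lia.
move=> i; rewrite size_reidx => hi; rewrite nth_mkseq // !nth4 hA hB hC /swapf.
case: (ltnP i a) => h1; first by rewrite h1.
case: (ltnP i (a + b)) => h2.
  rewrite (_ : (i + b < a) = false); last by lia.
  rewrite (_ : (i + b < a + b) = false); last by lia.
  rewrite (_ : (i + b < a + b + b) = true); last by lia.
  by congr (nth _ _ _); lia.
case: (ltnP i (a + b + b)) => h3.
  rewrite (_ : (i - b < a) = false); last by lia.
  rewrite (_ : (i - b < a + b) = true); last by lia.
  by congr (nth _ _ _); lia.
rewrite (_ : (i < a) = false); last by lia.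
rewrite (_ : (i < a + b) = false); last by lia.
rewrite (_ : (i < a + b + b) = false); last by lia.
by congr (nth _ _ _); lia.
Qed.


Lemma split_word (x : word) M : size x = M.+1 + M ->
  exists x1 x0 x2, [/\ size x1 = M, size x2 = M & x = x1 ++ x0 :: x2].
Proof.
move=> hx; exists (take M x), (nth false x M), (drop M.+1 x); split.
- by rewrite size_take hx; case: ifP => //; lia.
- by rewrite size_drop hx; lia.
- by rewrite -drop_nth ?cat_take_drop // hx; lia.
Qed.

Lemma addw_cons a b x y : addw (a :: x) (b :: y) = (a (+) b) :: addw x y.
Proof. by []. Qed.

Definition Gc M (H : code) (c1 c2 : word -> bool) : code := fun w =>
  exists x a b, size x = M.+1 + M /\ size a = M /\ H b /\
    w = addw x (addw a b ++ [:: parity a (+) c1 b] ++ a) ++ [:: parity x (+) c2 b] ++ x.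

Definition S4 (P1 P2 P3 P4 : word) := addw (addw P1 P2) (addw P3 P4).

Definition Gb M (H : code) (c1 c2 : word -> bool) : code := fun w =>
  exists P1 p P2 q P3 r P4, [/\ size P1 = M, size P2 = M, size P3 = M & size P4 = M] /\
   [/\ H (S4 P1 P2 P3 P4), p = r (+) parity (addw P2 P4) (+) c1 (S4 P1 P2 P3 P4),
       q = parity P3 (+) r (+) parity P4 (+) c2 (S4 P1 P2 P3 P4) &
       w = P1 ++ p :: P2 ++ q :: P3 ++ r :: P4].

Lemma Gc_Gb M H c1 c2 : (forall b, H b -> size b = M) ->
  forall w, Gc M H c1 c2 w <-> Gb M H c1 c2 w.
Proof.
move=> hH w; split.
- move=> [x [a [b [hx [ha [hb ->]]]]]]; have hbs := hH b hb.
  have [x1 [x0 [x2 [h1 h2 ->]]]] := split_word hx.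
  have eb : S4 (addw x1 (addw a b)) (addw x2 a) x1 x2 = b by rewrite /S4; pw.
  have ea : addw (addw x2 a) x2 = a by pw.
  exists (addw x1 (addw a b)), (x0 (+) (parity a (+) c1 b)), (addw x2 a),
    (parity (x1 ++ x0 :: x2) (+) c2 b), x1, x0, x2.
  split; first by split; rewrite ?size_addw; lia.
  rewrite eb ea; split=> //.
  + by rewrite addbA.
  + by rewrite parity_cat /= addbA.
  + by rewrite addw_cat ?size_addw ?addw_cons; [rewrite -catA | lia].
- move=> [P1 [p [P2 [q [P3 [r [P4 [[s1 s2 s3 s4] [hb hp hq ->]]]]]]]]].
  have hbs := hH _ hb.
  exists (P3 ++ r :: P4), (addw P2 P4), (S4 P1 P2 P3 P4).
  split; first by rewrite size_cat /=; lia.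
  split; first by rewrite size_addw; lia.
  split=> //.
  rewrite addw_cat ?size_addw /=; last by lia.
  have e1 : addw P3 (addw (addw P2 P4) (S4 P1 P2 P3 P4)) = P1 by move: hbs; rewrite /S4 => hbs; pw.
  have e2 : addw P4 (addw P2 P4) = P2 by pw.
  rewrite e1 addw_cons e2 -catA /= hp hq parity_cat /= !addbA.
  done.
Qed.


Lemma reidx_bl M L P1 p P2 q P3 r P4 : size P1 = M -> size P2 = M -> size P3 = M -> size P4 = M ->
  L = (M.+1 + M).+1 + (M.+1 + M) ->
  reidx (swapf M M.+1) L (P1 ++ p :: P2 ++ q :: P3 ++ r :: P4) = P1 ++ q :: P3 ++ p :: P2 ++ r :: P4.
Proof.
move=> h1 h2 h3 h4 hL.
have := @reidx_swap P1 (p :: P2) (q :: P3) (r :: P4) M M.+1 M.+1 L h1.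
by rewrite /= h2 h3 h4 => ->; rewrite //; lia.
Qed.

Lemma S4_swap P1 P2 P3 P4 M : size P1 = M -> size P2 = M -> size P3 = M -> size P4 = M ->
  S4 P1 P3 P2 P4 = S4 P1 P2 P3 P4.
Proof. move=> h1 h2 h3 h4; rewrite /S4; pw. Qed.

Lemma Gb_size M H c1 c2 w : Gb M H c1 c2 w -> size w = (M.+1 + M).+1 + (M.+1 + M).
Proof.
move=> [P1 [p [P2 [q [P3 [r [P4 [[s1 s2 s3 s4] [_ _ _ ->]]]]]]]]].
rewrite !size_cat /= !size_cat /= !size_cat /=; lia.
Qed.

Lemma EQ_swapb M L H mu : L = (M.+1 + M).+1 + (M.+1 + M) ->
  EQ L (Gb M H mu (fun _ => false)) (Gb M H (fun _ => false) mu).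
Proof.
move=> hL; split; first by move=> u /Gb_size ->.
exists (swapf M M.+1); split; first by apply: isbij_swap; lia.
move=> w; split.
- move=> [P1 [p [P2 [q [P3 [r [P4 [[s1 s2 s3 s4] [hb hp hq ->]]]]]]]]].
  exists (P1 ++ q :: P3 ++ p :: P2 ++ r :: P4); split; last by rewrite reidx_bl.
  exists P1, q, P3, p, P2, r, P4; split=> //.
  rewrite (S4_swap (M:=M)) //; split=> //.
  + rewrite hq parity_addw ?s3 ?s4 //.
    by case: (parity P3); case: (parity P4); case: r hp hq; case: (mu _).
  + rewrite hp parity_addw ?s2 ?s4 //.
    by case: (parity P2); case: (parity P4); case: r hp hq.
- move=> [u [[P1 [p [P2 [q [P3 [r [P4 [[s1 s2 s3 s4] [hb hp hq ->]]]]]]]]] ->]].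
  rewrite reidx_bl //.
  exists P1, q, P3, p, P2, r, P4; split=> //.
  rewrite (S4_swap (M:=M)) //; split=> //.
  + rewrite hq parity_addw ?s3 ?s4 //.
    by case: (parity P3); case: (parity P4); case: r hp hq.
  + rewrite hp parity_addw ?s2 ?s4 //.
    by case: (parity P2); case: (parity P4); case: r hp hq; case: (mu _).
Qed.


Lemma addw0 u L : size u = L -> addw u (zerow L) = u.
Proof.
move=> hu; apply: (@eq_from_nth _ false); first by rewrite size_addw size_nseq hu minnn.
by move=> i _; rewrite nth_addw ?size_nseq // nth_nseq; case: ifP => _; rewrite addbF.
Qed.

Lemma EQ_equiv L A B : EQ L A B -> equiv_codes L A B.
Proof.
move=> [hA [f [[hf [g [hg [hgf hfg]]]] hAB]]].
pose h (i : 'I_L) : 'I_L := Ordinal (hf _ (ltn_ord i)).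
have hinj : injective h.
  move=> i j /(congr1 val) /= e; apply: val_inj => /=.
  by have := hgf _ (ltn_ord i); rewrite e hgf // => ->.
exists (zerow L), (perm hinj); split; first by rewrite size_nseq.
have ep : forall u, size u = L -> permw (perm hinj) (addw u (zerow L)) = reidx f L u.
  move=> u hu; rewrite addw0 // /permw /reidx /mkseq -val_enum_ord -map_comp.
  by apply: eq_map => i /=; rewrite permE.
move=> w; split.
  by move=> /hAB [u [hu ->]]; exists u; rewrite ep ?hA.
by move=> [u [hu ->]]; apply/hAB; exists u; rewrite ep ?hA.
Qed.

Lemma hlenS n s : hlen n s.+1 = (hlen n s).+1 + hlen n s.
Proof.
rewrite /hlen expnS -mulnA.
have : 0 < 2 ^ s * n.+1 by rewrite muln_gt0 expn_gt0.
lia.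
Qed.

Lemma hlen0 n : hlen n 0 = n.
Proof. by rewrite /hlen expn0 mul1n subn1. Qed.

Lemma Hfam_size n H s : (forall b, H b -> size b = n) ->
  forall w, Hfam n H s w -> size w = hlen n s.
Proof.
move=> hH; elim: s => [|s IH] w /=; first by rewrite hlen0; apply: hH.
move=> [x [y [hx [hy ->]]]]; rewrite hlenS !size_cat size_addw hx (IH _ hy) minnn /=; lia.
Qed.

Lemma Vcode_size M H mu : (forall b, H b -> size b = M) ->
  forall w, Vcode M H mu w -> size w = M.+1 + M.
Proof.
move=> hH w [x [y [hx [hy ->]]]]; rewrite !size_cat size_addw hx (hH _ hy) minnn /=; lia.
Qed.

Lemma src_Gc M N H mu : N = M.+1 + M -> forall w,
  dbl N (Vcode M H mu) w <-> Gc M H mu (fun _ => false) w.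
Proof.
move=> -> w; split.
  move=> [x [y [hx [[a [b [ha [hb ->]]]] ->]]]].
  by exists x, a, b; rewrite addbF.
move=> [x [a [b [hx [ha [hb ->]]]]]].
by exists x, (addw a b ++ [:: parity a (+) mu b] ++ a); rewrite addbF; split=> //; split=> //; exists a, b.
Qed.

Lemma tgt_Gc M N H mu : (forall b, H b -> size b = M) -> N = M.+1 + M -> forall w,
  Vcode N (dbl M H) (fun w => mu (addw (take M w) (drop M.+1 w))) w <-> Gc M H (fun _ => false) mu w.
Proof.
move=> hH -> w.
have key : forall a b, size a = M -> H b ->
   addw (take M (addw a b ++ [:: parity a] ++ a)) (drop M.+1 (addw a b ++ [:: parity a] ++ a)) = b.
  move=> a b ha hb; have hbs := hH _ hb.
  rewrite take_size_cat ?size_addw ?ha ?hbs ?minnn //.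
  rewrite -cat1s catA drop_size_cat ?size_cat ?size_addw ?ha ?hbs ?minnn ?addn1 //.
  pw.
split.
  move=> [x [y [hx [[a [b [ha [hb ->]]]] ->]]]].
  by exists x, a, b; rewrite addbF key.
move=> [x [a [b [hx [ha [hb ->]]]]]].
exists x, (addw a b ++ [:: parity a] ++ a); rewrite key // addbF; split=> //; split=> //.
by exists a, b.
Qed.

Lemma part1 n H lam : (forall b, H b -> size b = n) -> forall s,
  EQ (hlen n s.+1) (Cfam n H lam s) (Vcode (hlen n s) (Hfam n H s) (lamfam n lam s)).
Proof.
move=> hH; elim=> [|s IH] /=.
  rewrite hlen0; apply: EQ_refl; rewrite hlenS hlen0; exact: Vcode_size.
apply: (EQ_trans (EQ_dbl IH (hlenS n s.+1))).
have hHs := Hfam_size hH (s := s).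
apply: (EQ_ext _ _ (EQ_swapb (Hfam n H s) (lamfam n lam s) _)).
- move=> w; apply: (iff_trans (iff_sym (@Gc_Gb _ _ _ _ hHs w))).
  apply: iff_sym; apply: src_Gc; exact: hlenS.
- move=> w; apply: (iff_trans (iff_sym (@Gc_Gb _ _ _ _ hHs w))).
  apply: iff_sym; apply: tgt_Gc => //; exact: hlenS.
- by rewrite -!hlenS.
Qed.


Definition phi M (v : word) := addw (take M v) (drop M.+1 v).

Lemma size_take_M M (u : word) : size u = M.+1 + M -> size (take M u) = M.
Proof. by move=> h; rewrite size_take h; case: ifP => //; lia. Qed.
Lemma size_drop_M M (u : word) : size u = M.+1 + M -> size (drop M.+1 u) = M.
Proof. by move=> h; rewrite size_drop h; lia. Qed.

Lemma size_phi M u : size u = M.+1 + M -> size (phi M u) = M.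
Proof. by move=> h; rewrite /phi size_addw size_take_M ?size_drop_M ?minnn. Qed.

Lemma phi_addw M u v : size u = M.+1 + M -> size v = M.+1 + M ->
  phi M (addw u v) = addw (phi M u) (phi M v).
Proof.
move=> hu hv.
have huv : size (addw u v) = M.+1 + M by rewrite size_addw hu hv minnn.
apply: (@eq_from_nth _ false).
  by rewrite size_addw !size_phi ?minnn.
move=> i; rewrite size_phi // => hi.
rewrite /phi !nth_addw ?size_addw ?size_take_M ?size_drop_M ?minnn //.
rewrite !nth_take // !nth_drop !nth_addw ?hu ?hv //.
by bcase.
Qed.

Lemma phi_zero M : phi M (zerow (M.+1 + M)) = zerow M.
Proof.
rewrite /phi take_nseq ?drop_nseq; last by lia.
rewrite (_ : M.+1 + M - M.+1 = M); last by lia.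
by rewrite addw0 // size_nseq.
Qed.

Lemma size_foldr L ws : (forall u, u \in ws -> size u = L) -> size (foldr addw (zerow L) ws) = L.
Proof.
elim: ws => [|u ws IH] h /=; first by rewrite size_nseq.
have e : size (foldr addw (zerow L) ws) = L.
  by apply: IH => v hv; apply: h; rewrite in_cons hv orbT.
by rewrite size_addw e h ?mem_head ?minnn.
Qed.

Lemma lift_span M (G G' : word -> Prop) :
  (forall u, G u -> exists v, G' v /\ size v = M.+1 + M /\ phi M v = u) ->
  forall ws, (forall u, u \in ws -> G u) -> exists ws', (forall v, v \in ws' -> G' v /\ size v = M.+1 + M) /\
    phi M (foldr addw (zerow (M.+1 + M)) ws') = foldr addw (zerow M) ws.
Proof.
move=> hG; elim=> [|u ws IH] h.
  by exists [::]; split=> //; rewrite /= phi_zero.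
have [ws' [h1 h2]] : exists ws', (forall v, v \in ws' -> G' v /\ size v = M.+1 + M) /\
    phi M (foldr addw (zerow (M.+1 + M)) ws') = foldr addw (zerow M) ws.
  by apply: IH => v hv; apply: h; rewrite in_cons hv orbT.
have [v [hv1 [hv2 hv3]]] := hG u (h u (mem_head _ _)).
exists (v :: ws'); split.
  by move=> x; rewrite in_cons => /orP [/eqP -> | /h1].
change (phi M (addw v (foldr addw (zerow (M.+1 + M)) ws')) = addw u (foldr addw (zerow M) ws)).
rewrite phi_addw // ?hv3 ?h2 //.
by apply: size_foldr => x /h1 [].
Qed.


Lemma set_nth_cat (w : word) c b : c < size w -> set_nth false w c b = take c w ++ b :: drop c.+1 w.
Proof.
elim: w c => [|a w IH] [|c] h //=; first by rewrite drop0.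
by rewrite IH.
Qed.

Lemma wt_set w c b : c < size w -> wt (set_nth false w c b) + nth false w c = wt w + b.
Proof.
move=> h; rewrite set_nth_cat //.
have {4}-> : w = take c w ++ nth false w c :: drop c.+1 w by rewrite -drop_nth ?cat_take_drop.
rewrite !wt_cat /wt /=; lia.
Qed.

Lemma wt_zero M : wt (zerow M) = 0.
Proof. by rewrite /wt count_nseq. Qed.

Lemma add0w u M : size u = M -> addw (zerow M) u = u.
Proof.
move=> hu; apply: (@eq_from_nth _ false); first by rewrite size_addw size_nseq hu minnn.
by move=> i _; rewrite nth_addw ?size_nseq // nth_nseq; case: ifP.
Qed.

Lemma find_other (u : word) M d : size u = M -> wt u = 3 -> d < M -> nth false u d ->
  exists c, [/\ c < M, c != d & nth false u c].
Proof.
move=> hu hw hd hn.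
case h: (has (fun c => (c != d) && nth false u c) (iota 0 M)).
  move/hasP: h => [c]; rewrite mem_iota add0n => hc /andP [h1 h2].
  by exists c.
move/hasPn: h => h.
have e : u = set_nth false (zerow M) d true.
  apply: (@eq_from_nth _ false); first by rewrite size_set_nth size_nseq hu; lia.
  move=> i; rewrite hu => hi; rewrite nth_set_nth /=.
  case: eqP => [->|/eqP ne] //.
  have := h i; rewrite mem_iota add0n hi ne /= => /(_ isT).
  by rewrite nth_nseq hi; case: (nth false u i).
have := @wt_set (zerow M) d true; rewrite size_nseq hd -e hw wt_zero nth_nseq hd => /(_ isT).
by [].
Qed.

Lemma gen_a M (Hs : code) j u : j.-1 < M -> [/\ Hs u, size u = M, wt u = 3 & nth false u j.-1] ->
  exists v, [/\ dbl M Hs v, size v = M.+1 + M, wt v = 3 & nth false v j.-1] /\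
    size v = M.+1 + M /\ phi M v = u.
Proof.
move=> hj [hu su wu nu].
have sv : size (u ++ false :: zerow M) = M.+1 + M by rewrite size_cat /= size_nseq su; lia.
exists (u ++ false :: zerow M); split; last split=> //.
  split=> //.
  - exists (zerow M), u; split; first by rewrite size_nseq.
    split=> //; rewrite add0w // parity_wt wt_zero //.
  - by rewrite wt_cat /= wt_zero wu.
  - by rewrite nth_cat su hj.
rewrite /phi take_size_cat // -cat1s catA drop_size_cat ?size_cat ?su ?addn1 //.
by rewrite addw0.
Qed.

Lemma gen_b M (Hs : code) j u : 1 <= j -> j.-1 < M -> [/\ Hs u, size u = M, wt u = 3 & nth false u j.-1] ->
  exists v, [/\ dbl M Hs v, size v = M.+1 + M, wt v = 3 & nth false v (j + M.+1).-1] /\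
    size v = M.+1 + M /\ phi M v = u.
Proof.
move=> hj1 hj [hu su wu nu].
have [c [hc hcj nc]] := find_other su wu hj nu.
set x := set_nth false u c false.
set e := set_nth false (zerow M) c true.
have sx : size x = M by rewrite size_set_nth su; lia.
have se : size e = M by rewrite size_set_nth size_nseq; lia.
have wx : wt x = 2.
  have := @wt_set u c false; rewrite su => /(_ hc).
  by rewrite nc wu -/x; lia.
have we : wt e = 1.
  have := @wt_set (zerow M) c true; rewrite size_nseq nth_nseq hc -/e wt_zero => /(_ isT).
  lia.
have exu : addw x u = e.
  apply: (@eq_from_nth _ false); first by rewrite size_addw sx su se minnn.
  move=> i _; rewrite nth_addw ?sx ?su // !nth_set_nth /= nth_nseq.
  case: eqP => [->|_]; first by rewrite nc.
  by case: (nth false u i); case: ifP.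
have eex : addw e x = u.
  apply: (@eq_from_nth _ false); first by rewrite size_addw sx su se minnn.
  move=> i _; rewrite nth_addw ?sx ?se // !nth_set_nth /= nth_nseq.
  case: eqP => [->|_]; first by rewrite nc.
  by case: (nth false u i); case: ifP.
have sv : size (e ++ false :: x) = M.+1 + M by rewrite size_cat /= sx se; lia.
exists (e ++ false :: x); split; last split=> //.
  split=> //.
  - exists x, u; split=> //; split=> //.
    by rewrite exu parity_wt wx.
  - by rewrite wt_cat /= wx we.
  - rewrite (_ : (j + M.+1).-1 = M.+1 + j.-1); last by lia.
    rewrite nth_cat se (_ : (M.+1 + j.-1 < M) = false); last by lia.
    rewrite (_ : M.+1 + j.-1 - M = (j.-1).+1); last by lia.
    by rewrite /= /x nth_set_nth /= eq_sym (negbTE hcj).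
rewrite /phi take_size_cat // -cat1s catA drop_size_cat ?size_cat ?se ?addn1 //.
Qed.


Lemma lift_c n H lam s j c : 1 <= j <= hlen n s ->
  (exists w, component (hlen n s) (Hfam n H s) j w /\ lamfam n lam s w = c) ->
  (exists w, component (hlen n s.+1) (Hfam n H s.+1) j w /\ lamfam n lam s.+1 w = c) /\
  (exists w, component (hlen n s.+1) (Hfam n H s.+1) (j + (hlen n s).+1) w /\ lamfam n lam s.+1 w = c).
Proof.
move=> /andP [hj1 hjM] [w [[ws [hws ->]] hc]].
have ej : j.-1 < hlen n s by lia.
have el : lamfam n lam s.+1 = fun w => lamfam n lam s (phi (hlen n s) w) by [].
rewrite hlenS el; split.
- have [ws' [h1 h2]] := lift_span
    (G' := fun v => [/\ Hfam n H s.+1 v, size v = (hlen n s).+1 + hlen n s, wt v = 3 & nth false v j.-1])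
    (fun u hu => gen_a ej hu) hws.
  exists (foldr addw (zerow ((hlen n s).+1 + hlen n s)) ws'); split; last by rewrite h2.
  by exists ws'; split=> // v /h1 [].
- have [ws' [h1 h2]] := lift_span
    (G' := fun v => [/\ Hfam n H s.+1 v, size v = (hlen n s).+1 + hlen n s, wt v = 3 &
                       nth false v (j + (hlen n s).+1).-1])
    (fun u hu => gen_b hj1 ej hu) hws.
  exists (foldr addw (zerow ((hlen n s).+1 + hlen n s)) ws'); split; last by rewrite h2.
  by exists ws'; split=> // v /h1 [].
Qed.

Theorem lemma5 (k n : nat) (H : code) (lam : word -> bool) :
  n = 2 ^ k - 1 ->
  is_hamming n H ->
  lam (zerow n) = false ->
  forall s : nat,
    let N := 2 ^ s.+1 * n.+1 - 1 in
    let M := 2 ^ s * n.+1 - 1 in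
    (* N = length of C_s, M = (N-1)/2, (N+1)/2 = M+1 *)
    equiv_codes N (Cfam n H lam s) (Vcode M (Hfam n H s) (lamfam n lam s)) /\
    (forall j : nat, 1 <= j <= M ->
       pierces (component M (Hfam n H s) j) (lamfam n lam s) ->
       pierces (component N (Hfam n H s.+1) j) (lamfam n lam s.+1) /\
       pierces (component N (Hfam n H s.+1) (j + M.+1)) (lamfam n lam s.+1)).
Proof.
move=> _ [hH _ _ _] _ s N M; split.
  exact: (EQ_equiv (part1 lam hH s)).
move=> j hj [h0 h1].
have [a0 b0] := lift_c hj h0.
have [a1 b1] := lift_c hj h1.
by split; split.
Qed.
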